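(* Let $a,b$ be integers with $0<b<a$, let $S=\langle a,a+1,\ldots,a+b\rangle$ with conductor $c$, and let $m\ge 2c-1$. Let $0=i_0<i_1<\cdots<i_t<a+b$ be integers. Then $$\sharp\mathrm D(m,m+i_1,\ldots,m+i_t)\ge\sharp\mathrm D(m,m+1,\ldots,m+t).$$
   Context: The conductor $c$ of a numerical semigroup $S$ is the least element of $S$ with $c+n\in S$ for all $n\in\mathbb N$. For $x\in S$, $\mathrm D(x)=\{\alpha\in S\mid x-\alpha\in S\}$, and $\mathrm D(x_1,\ldots,x_t)=\mathrm D(x_1)\cup\cdots\cup\mathrm D(x_t)$. *)

(* Defs.v *)
From mathcomp Require Import all_boot.
Set Implicit Arguments. Unset Strict Implicit. Unset Printing Implicit Defensive.

(* Coefficients can be bounded by x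
   (when a > 0; bounding never changes the set since a zero generator adds
   nothing), which makes this a decidable (boolean) predicate. *)
Definition inS (a b x : nat) : bool :=
  [exists f : {ffun 'I_b.+1 -> 'I_x.+1},
     \sum_(j < b.+1) (f j : nat) * (a + j) == x].

Definition is_conductor (a b c : nat) : Prop :=
  [/\ inS a b c, (forall n, inS a b (c + n)) &
      (forall c', inS a b c' -> (forall n, inS a b (c' + n)) -> c <= c')].

(* All its elements are bounded
   by the max of the x_k, so we count it inside 'I_(max+1). *)
Definition Dset (a b : nat) (xs : seq nat) : {set 'I_(\max_(x <- xs) x).+1} :=
  [set al : 'I_(\max_(x <- xs) x).+1 |
     inS a b al && has (fun x => (al <= x) && inS a b (x - al)) xs].

Definition Dcard (a b : nat) (xs : seq nat) : nat := #|Dset a b xs|.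

(* Main.v *)
Require Import Defs.
From mathcomp Require Import all_boot zify.

Section S.
Variables a b : nat.
Hypothesis a0 : 0 < a.

Lemma inS0 : inS a b 0.
Proof.
apply/existsP; exists [ffun => ord0]; apply/eqP.
by rewrite big1 // => j _; rewrite ffunE.
Qed.

Lemma inS_add x j : j <= b -> inS a b x -> inS a b (x + (a + j)).
Proof.
move=> hj /existsP [f /eqP hf]; apply/existsP.
have hj' : j < b.+1 by [].
pose j0 : 'I_b.+1 := Ordinal hj'.
exists [ffun j' => inord (f j' + (j' == j0)) : 'I_(x + (a+j)).+1].
apply/eqP.
rewrite (eq_bigr (fun j' => f j' * (a + j') + (j' == j0) * (a + j'))); last first.
  move=> j' _; rewrite ffunE inordK ?mulnDl //; have := ltn_ord (f j').
  case: (j' == j0) => /=; lia.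
rewrite big_split /= hf; congr (_ + _).
rewrite (bigD1 j0) //= eqxx big1 ?addn0 ?mul1n //.
by move=> j' /negbTE ->; rewrite mul0n.
Qed.

Lemma inS_of k x : k * a <= x <= k * (a + b) -> inS a b x.
Proof.
elim: k x => [|k IH] x.
  by rewrite !mul0n; case/andP=> _; rewrite leqn0 => /eqP ->; apply: inS0.
case/andP=> h1 h2.
pose j := minn (x - k.+1 * a) b.
have -> : x = (x - (a + j)) + (a + j).
  rewrite /j; move: h1; rewrite mulSn; lia.
apply: inS_add; first by rewrite /j geq_minr.
apply: IH; move: h1 h2; rewrite /j !mulSn mulnDr; lia.
Qed.

Lemma inS_to x : inS a b x -> exists k, k * a <= x <= k * (a + b).
Proof.
case/existsP=> f /eqP hf; exists (\sum_(j < b.+1) (f j : nat)).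
have h1 : (\sum_(j < b.+1) (f j : nat)) * a <= \sum_(j < b.+1) (f j : nat) * (a + j).
  by rewrite big_distrl /=; apply: leq_sum => j _; rewrite leq_mul2l leq_addr orbT.
have h2 : \sum_(j < b.+1) (f j : nat) * (a + j) <= (\sum_(j < b.+1) (f j : nat)) * (a + b).
  rewrite big_distrl /=; apply: leq_sum => j _.
  by rewrite leq_mul2l leq_add2l -ltnS ltn_ord orbT.
rewrite hf in h1 h2; by rewrite h1 h2.
Qed.

Lemma inSP x : reflect (exists k, k * a <= x <= k * (a + b)) (inS a b x).
Proof.
by apply: (iffP idP) => [/inS_to|[k /inS_of]].
Qed.
End S.

Lemma cnt_trunc (P : pred nat) lo n n' :
  (forall x, P x -> x < lo + n) -> n <= n' ->
  count P (iota lo n') = count P (iota lo n).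
Proof.
move=> hP hn; rewrite -(subnKC hn) iotaD count_cat.
have -> : count P (iota (lo + n) (n' - n)) = 0; last by rewrite addn0.
apply/eqP; rewrite -leqn0 leqNgt -has_count; apply/hasP => [[x]].
rewrite mem_iota => /andP[h1 _] /hP; lia.
Qed.

Lemma uniq_cnt (P : pred nat) (L : seq nat) lo n :
  uniq L -> (forall x, x \in L -> P x && (lo <= x < lo + n)) ->
  size L <= count P (iota lo n).
Proof.
move=> hu hL; rewrite -size_filter; apply: uniq_leq_size => // x hx.
by rewrite mem_filter mem_iota; case/andP: (hL x hx) => -> ->.
Qed.

Lemma cnt_disj (P Q : pred nat) s : (forall x, P x -> ~~ Q x) ->
  count P s + count Q s = count (predU P Q) s.
Proof.
move=> h; elim: s => //= x s IH; rewrite -IH.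
case hp: (P x) => /=; last lia.
by rewrite (negbTE (h _ hp)); lia.
Qed.

Lemma cnt_split (P q : pred nat) s :
  count P s = count (fun r => P r && q r) s + count (fun r => P r && ~~ q r) s.
Proof.
elim: s => //= x s IH; rewrite IH; case: (P x) (q x) => [] [] /=; lia.
Qed.

Lemma rev_iota p n : rev (iota p n) = map (fun y => p + n - 1 - y) (iota 0 n).
Proof.
elim: n => // n IH.
rewrite -addn1 iotaD /= cats1 rev_rcons IH addn1 /=.
have -> : iota 1 n = map (addn 1) (iota 0 n) by rewrite -iotaDl.
rewrite -map_comp; congr (_ :: _); first lia.
by apply: eq_map => y /=; lia.
Qed.

Lemma card_cnt n (Q : nat -> bool) : #|[set al : 'I_n | Q al]| = count Q (iota 0 n).
Proof.
rewrite -val_enum_ord count_map cardsE cardE.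
rewrite /enum_mem -enumT size_filter [in RHS](@eq_filter _ _ predT) ?filter_predT //.
Qed.

Lemma blockS a b k r d : 0 < a -> 1 <= r -> r + k * b < a -> d < a + b ->
  (d <= k * (a + b) + r) && inS a b (k * (a + b) + r - d)
  = (r <= d) && (d <= r + k * b).
Proof.
move=> a0 r1 hr hd; rewrite mulnDr; apply/idP/idP.
  case/andP=> hdy /(inSP _ _ a0) [j /andP [h1 h2]].
  rewrite mulnDr in h2.
  case: (ltngtP j k) => hjk.
  - have : j.+1 * (a + b) <= k * (a + b) by rewrite leq_mul2r hjk orbT.
    rewrite mulSn !mulnDr; lia.
  - have : k.+1 * a <= j * a by rewrite leq_mul2r hjk orbT.
    rewrite mulSn; lia.
  - subst j; lia.
case/andP=> h1 h2; apply/andP; split; first lia.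
apply/(inSP _ _ a0); exists k; rewrite mulnDr; lia.
Qed.

Lemma in_io k n : k < n -> k \in iota 0 n.
Proof. by rewrite mem_iota add0n. Qed.

Section G.
Variables (a b : nat) (i : nat -> nat) (t : nat).
Hypotheses (a0 : 0 < a) (hi0 : i 0 = 0)
  (hinc : forall k, k < t -> i k < i k.+1) (hT : i t < a + b).

Lemma istrict j k : j < k -> k <= t -> i j < i k.
Proof.
elim: k => // k IH hjk hk; rewrite ltnS leq_eqVlt in hjk.
case/orP: hjk => [/eqP -> | hjk]; first exact: hinc _ hk.
have := IH hjk (ltnW hk); have := hinc _ hk; lia.
Qed.

Lemma imono k : k <= t -> i k <= i t.
Proof.
rewrite leq_eqVlt => /orP [/eqP -> // | h]; exact/ltnW/istrict.
Qed.

Lemma ige k : k <= t -> k <= i k.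
Proof.
elim: k => // k IH hk; have := hinc _ hk; have := IH (ltnW hk); lia.
Qed.

Definition good y k := (i t - i k <= y) && inS a b (y - (i t - i k)).
Definition bad y := ~~ has (good y) (iota 0 t.+1).
Definition bp k r := (r <= a - 1 - k * b) &&
  ~~ has (fun k' => (r <= i t - i k') && (i t - i k' <= r + k * b)) (iota 0 t.+1).
Definition inD r := has (fun k' => r == i t - i k') (iota 0 t.+1).

Lemma good_t y : good y t = inS a b y.
Proof. by rewrite /good subnn subn0. Qed.

Lemma bad_gap y : bad y -> ~~ inS a b y.
Proof.
rewrite /bad => hb; apply/negP => h; move/negP: hb; apply.
by apply/hasP; exists t; rewrite ?good_t //; apply: in_io.
Qed.

Lemma bad_block k r : 1 <= r <= a + b -> bad (k * (a + b) + r) = bp k r.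
Proof.
case/andP=> r1 r2; rewrite /bad /bp.
case: (leqP r (a - 1 - k * b)) => hr; rewrite ?andTb ?andFb.
  congr negb; apply: eq_in_has => k' _; rewrite /good blockS //; lia.
apply/negbF/hasP; exists t; first exact: in_io.
rewrite good_t; apply/(inSP _ _ a0); exists k.+1; rewrite !mulSn mulnDr; lia.
Qed.

Lemma cnt_block K : count bad (iota 0 (K * (a + b)).+1) =
  \sum_(0 <= k < K) count (bp k) (iota 1 (a + b)).
Proof.
elim: K => [|K IH].
  rewrite mul0n big_geq //= /bad.
  suff -> : has (good 0) (iota 0 t.+1) by [].
  apply/hasP; exists t; first exact: in_io.
  by rewrite good_t; apply: inS0.
rewrite big_nat_recr // -IH.
have -> : (K.+1 * (a + b)).+1 = (K * (a + b)).+1 + (a + b) by rewrite mulSn; lia.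
rewrite iotaD count_cat; congr (_ + _).
rewrite add0n -addn1 iotaDl count_map; apply: eq_in_count => r.
rewrite mem_iota => hr /=; rewrite bad_block //; lia.
Qed.

Lemma cntD : t <= count inD (iota 1 (i t)).
Proof.
have := @uniq_cnt inD (map (fun k => i t - i k) (iota 0 t)) 1 (i t).
rewrite size_map size_iota; apply.
  rewrite map_inj_in_uniq ?iota_uniq // => x y; rewrite !mem_iota => hx hy /= e.
  have ex : i x = i y.
    have h1 : i x <= i t by apply: imono; lia.
    have h2 : i y <= i t by apply: imono; lia.
    lia.
  case: (ltngtP x y) => // h.
    have : i x < i y by apply: istrict; lia.
    lia.
  have : i y < i x by apply: istrict; lia.
  lia.
move=> x /mapP [k]; rewrite mem_iota => hk ->; apply/andP; split.
  by apply/hasP; exists k; [apply: in_io; lia|].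
have : i k < i t by apply: istrict; lia.
lia.
Qed.

Lemma L0 : count (fun r => bp 0 r && (r <= i t)) (iota 1 (a + b)) + t <= i t.
Proof.
rewrite (@cnt_trunc _ 1 (i t) (a + b)); last by lia.
  have h1 : count (fun r => bp 0 r && (r <= i t)) (iota 1 (i t))
      <= count (predC inD) (iota 1 (i t)).
    apply: sub_count => r /andP [/andP [_ hn] _] /=; apply: contra hn.
    case/hasP=> k hk /eqP e; apply/hasP; exists k => //.
    by rewrite -e mul0n addn0 leqnn.
  have := count_predC inD (iota 1 (i t)); rewrite size_iota.
  have := cntD; lia.
by move=> x /andP [_]; lia.
Qed.

Lemma L1 k : count (fun r => bp k.+1 r && (r <= i t)) (iota 1 (a + b)) <=
  count (fun r => (r <= a - 1 - k * b) && (t < r) && (r <= i t)) (iota 1 (a + b)).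
Proof.
set P := fun r => bp k.+1 r && (r <= i t).
have hQ : minn (a - 1 - k * b) (i t) - t <=
    count (fun r => (r <= a - 1 - k * b) && (t < r) && (r <= i t)) (iota 1 (a + b)).
  have := @uniq_cnt (fun r => (r <= a - 1 - k * b) && (t < r) && (r <= i t))
    (iota t.+1 (minn (a - 1 - k * b) (i t) - t)) 1 (a + b).
  rewrite size_iota; apply; first exact: iota_uniq.
  move=> x; rewrite mem_iota => hx.
  apply/andP; split; first (apply/andP; split; first (apply/andP; split)); lia.
case: (posnP (count P (iota 1 (a + b)))) => [-> // | hpos].
have exP : exists r, P r.
  by move: hpos; rewrite -has_count => /hasP [r _ hr]; exists r.
have ub : forall r, P r -> r <= i t by move=> r /andP [].
case: (ex_maxnP exP ub) => r0 hP0 hmax.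
case/andP: (hP0) => /andP [hr0a /hasPn hno] hr0t.
have r0T : r0 + k.+1 * b < i t.
  have := hno 0 (@in_io 0 t.+1 (ltn0Sn t)); rewrite hi0 subn0 hr0t /= -ltnNge; lia.
rewrite (@cnt_trunc P 1 (i t) (a + b)); first last.
- lia.
- by move=> x /andP [_]; lia.
pose J := fun r => (r0 < r) && (r <= r0 + k.+1 * b).
have d1 : forall x, P x -> ~~ inD x.
  move=> x /andP [/andP [_ hn] _]; apply: contra hn.
  case/hasP=> k' hk /eqP e; apply/hasP; exists k' => //.
  by rewrite -e leqnn leq_addr.
have d2 : forall x, predU P inD x -> ~~ J x.
  move=> x /orP [hx | /hasP [k' hk /eqP e]]; rewrite /J.
    by have := hmax x hx; apply: contraL => /andP [h _]; rewrite -ltnNge.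
  have := hno k' hk; apply: contra => /andP [h1 h2]; rewrite -e; apply/andP; split; lia.
have e1 := @cnt_disj _ _ (iota 1 (i t)) d1.
have e2 := @cnt_disj _ _ (iota 1 (i t)) d2.
have := count_size (predU (predU P inD) J) (iota 1 (i t)); rewrite size_iota.
have hJ : k.+1 * b <= count J (iota 1 (i t)).
  have := @uniq_cnt J (iota r0.+1 (k.+1 * b)) 1 (i t).
  rewrite size_iota; apply; first exact: iota_uniq.
  move=> x; rewrite mem_iota => hx; apply/andP; split; first (apply/andP; split); lia.
have := cntD.
move: hJ r0T hQ; rewrite mulSn; clearbody J P; move: e1 e2; move: (count P _) (count inD _) (count J _) (count (predU P inD) _) (count (predU (predU P inD) J) _) (count (fun r => _ && _) (iota 1 (a + b))) => x1 x2 x3 x4 x5 x6; lia.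
Qed.

Variables (c m : nat).
Hypotheses (hc : forall n, inS a b (c + n)) (hm : 2 * c <= m + 1).

Lemma bad_lt y : bad y -> y < c.
Proof.
move=> hy; rewrite ltnNge; apply/negP => h.
by move: (bad_gap _ hy); rewrite -(subnKC h) hc.
Qed.

Lemma G1 : Dcard a b [seq m + i k | k <- iota 0 t.+1] + count bad (iota 0 c)
  = count (inS a b) (iota 0 (m + 1 - c)) + (c + i t).
Proof.
have hbad := bad_lt.
rewrite /Dcard /Dset (card_cnt _ (fun al => inS a b al &&
  has (fun x => (al <= x) && inS a b (x - al)) [seq m + i k | k <- iota 0 t.+1])).
set Q := (X in count X (iota 0 (\max_(x <- _) x).+1)).
set M := (\max_(x <- _) x).
have hmem : m + i t \in [seq m + i k | k <- iota 0 t.+1].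
  by apply/mapP; exists t => //; exact: in_io.
rewrite (@cnt_trunc Q 0 (m + i t).+1 M.+1); first last.
- by rewrite ltnS; exact: (leq_bigmax_seq _ hmem).
- move=> x /andP [_ /hasP [y /mapP [k hk ->] /andP [h _]]].
  have : i k <= i t by apply: imono; move: hk; rewrite mem_iota; lia.
  lia.
have -> : (m + i t).+1 = (m + 1 - c) + (c + i t) by lia.
rewrite iotaD count_cat add0n.
have E1 : count Q (iota 0 (m + 1 - c)) = count (inS a b) (iota 0 (m + 1 - c)).
  apply: eq_in_count => x; rewrite mem_iota => hx /=.
  rewrite /Q; case: (inS a b x) => //; rewrite andTb.
  apply/hasP; exists m; first by apply/mapP; exists 0; [exact: in_io | rewrite hi0 addn0].
  apply/andP; split; first lia.
  have -> : m - x = c + (m - x - c) by lia.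
  exact: hc.
have E2 : count Q (iota (m + 1 - c) (c + i t)) = (c + i t) - count bad (iota 0 (c + i t)).
  rewrite -count_rev rev_iota count_map.
  have := count_predC bad (iota 0 (c + i t)); rewrite size_iota.
  suff -> : count (preim (fun y => m + 1 - c + (c + i t) - 1 - y) Q) (iota 0 (c + i t))
    = count (predC bad) (iota 0 (c + i t)) by lia.
  apply: eq_in_count => y; rewrite mem_iota => hy /=.
  have -> : m + 1 - c + (c + i t) - 1 - y = m + i t - y by lia.
  rewrite /Q /bad negbK.
  have -> : inS a b (m + i t - y) = true.
    have -> : m + i t - y = c + (m + i t - y - c) by lia.
    exact: hc.
  rewrite andTb has_map; apply: eq_in_has => k; rewrite mem_iota => hk /=; rewrite /good.
  have hik : i k <= i t by apply: imono; lia.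
  have E : (m + i t - y <= m + i k) = (i t - i k <= y) by apply/idP/idP; lia.
  rewrite E; case: (leqP (i t - i k) y) => h //=.
  congr (inS a b _); lia.
have hb : forall x, bad x -> x < 0 + c by move=> x /hbad; rewrite add0n.
rewrite E1 E2 (@cnt_trunc bad 0 c (c + i t) hb (leq_addr _ _)).
have := count_size bad (iota 0 c); rewrite size_iota; lia.
Qed.

End G.

Lemma bp_id a b t k r : 1 <= r ->
  bp a b (fun k => k) t k r = (r <= a - 1 - k * b) && (t < r).
Proof.
move=> r1; rewrite /bp; congr (_ && _).
case: (leqP r t) => h.
  apply/negbF/hasP; exists (t - r); first by apply: in_io; lia.
  apply/andP; split; lia.
apply/negbT/hasPn => k' _; apply/negP => /andP [h1 h2]; lia.
Qed.

Theorem lemma4p12 (a b c m t : nat) (i : nat -> nat) :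
  0 < b -> b < a -> is_conductor a b c -> 2 * c <= m + 1 ->
  i 0 = 0 -> (forall k, k < t -> i k < i k.+1) -> i t < a + b ->
  Dcard a b [seq m + k | k <- iota 0 t.+1]
    <= Dcard a b [seq m + i k | k <- iota 0 t.+1].
Proof.
move=> b0 ba hcond hm hi0 hinc hT.
have a0 : 0 < a by lia.
case: hcond => _ hc _.
pose j := fun k : nat => k.
have hj0 : j 0 = 0 by [].
have hjinc : forall k, k < t -> j k < j k.+1 by move=> k _; rewrite /j.
have htt : t <= i t by apply: (@ige _ _ _ _ a0 hi0 hinc hT); lia.
have hjT : j t < a + b by rewrite /j; lia.
have G1i := @G1 _ _ _ _ a0 hi0 hinc hT _ _ hc hm.
have G1c := @G1 _ _ _ _ a0 hj0 hjinc hjT _ _ hc hm.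
have tr : forall (f : nat -> nat) (h0 : f 0 = 0) (hinc' : forall k, k < t -> f k < f k.+1)
    (hT' : f t < a + b),
    count (bad a b f t) (iota 0 c) =
    \sum_(0 <= k < c.+1) count (bp a b f t k) (iota 1 (a + b)).
  move=> f h0 hinc' hT'.
  rewrite -(@cnt_block _ _ _ _ a0 h0 hT') (@cnt_trunc _ 0 c); first by [].
    by move=> x /(@bad_lt _ _ _ _ _ hc); rewrite add0n.
  have := @leq_pmulr c (a + b) (ltn_addr _ a0); rewrite mulSn; lia.
rewrite (tr _ hi0 hinc hT) in G1i.
rewrite (tr _ hj0 hjinc hjT) in G1c.
pose A := fun k => count (fun r => bp a b i t k r && (r <= i t)) (iota 1 (a + b)).
pose Pk := fun k => count (fun r => (r <= a - 1 - k * b) && (t < r) && ~~ (r <= i t))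
  (iota 1 (a + b)).
pose Qk := fun k => count (fun r => (r <= a - 1 - k * b) && (t < r) && (r <= i t))
  (iota 1 (a + b)).
have Hc : \sum_(0 <= k < c.+1) count (bp a b j t k) (iota 1 (a + b)) =
    \sum_(0 <= k < c.+1) Pk k + \sum_(0 <= k < c.+1) Qk k.
  rewrite -big_split; apply: eq_bigr => k _ /=.
  rewrite (@eq_in_count _ _ (fun r => (r <= a - 1 - k * b) && (t < r))); last first.
    by move=> r; rewrite mem_iota => /andP [h _]; exact: bp_id.
  by rewrite (cnt_split _ (fun r => r <= i t)) addnC.
have Hi : \sum_(0 <= k < c.+1) count (bp a b i t k) (iota 1 (a + b)) <=
    \sum_(0 <= k < c.+1) Pk k + \sum_(0 <= k < c.+1) A k.
  rewrite -big_split; apply: leq_sum => k _ /=.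
  rewrite (cnt_split _ (fun r => r <= i t)) addnC; apply: leq_add => //.
  apply: sub_count => r /= /andP [/andP [hL _] hn]; rewrite hL hn andbT /=.
  by move: hn; rewrite -ltnNge; lia.
have h0 : A 0 + t <= i t := @L0 _ _ _ _ a0 hi0 hinc hT.
have h1 : \sum_(0 <= k < c) A k.+1 <= \sum_(0 <= k < c) Qk k.
  by apply: leq_sum => k _; exact: (@L1 _ _ _ _ a0 hi0 hinc hT k).
have HA : \sum_(0 <= k < c.+1) A k + t <= \sum_(0 <= k < c.+1) Qk k + i t.
  rewrite big_nat_recl // [in X in _ <= X]big_nat_recr //=.
  clearbody A Pk Qk; lia.
have -> : [seq m + k | k <- iota 0 t.+1] = [seq m + j k | k <- iota 0 t.+1] by [].
have jt : j t = t by [].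
rewrite jt in G1c.
clearbody A Pk Qk j; lia.
Qed.
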